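(* Let $G$ be a group, $S\subseteq G$ a subset and $H$ a subgroup of $G$. Suppose the composite map $S\hookrightarrow G\to G/H$ is surjective and at least one fibre of this map contains exactly one element. Then $H$ is a minimal complement of $S$ in $G$.
   Context: $G/H$ denotes the set of left cosets $gH$, i.e. classes of the relation $g_1\sim g_2$ iff $g_1^{-1}g_2\in H$. A nonempty $W'\subseteq G$ is a complement to $W$ if $WW'=G$; it is minimal if no proper subset of $W'$ is a complement to $W$. *)

(* Defs.v *)
Set Implicit Arguments.

Record is_group (G : Type) (mul : G -> G -> G) (one : G) (inv : G -> G) : Prop := {
  mulA  : forall x y z, mul x (mul y z) = mul (mul x y) z;
  mul1g : forall x, mul one x = x;
  mulg1 : forall x, mul x one = x;
  mulVg : forall x, mul (inv x) x = one;
  mulgV : forall x, mul x (inv x) = one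
}.

Definition is_subgroup (G : Type) (mul : G -> G -> G) (one : G) (inv : G -> G)
  (H : G -> Prop) : Prop :=
  H one /\ (forall x y, H x -> H y -> H (mul x y)) /\ (forall x, H x -> H (inv x)).

Definition setmul (G : Type) (mul : G -> G -> G) (A B : G -> Prop) (g : G) : Prop :=
  exists a b, A a /\ B b /\ g = mul a b.

Definition is_complement (G : Type) (mul : G -> G -> G) (W W' : G -> Prop) : Prop :=
  (exists x, W' x) /\ (forall g, setmul mul W W' g).

Definition is_minimal_complement (G : Type) (mul : G -> G -> G) (W W' : G -> Prop) : Prop :=
  is_complement mul W W' /\
  forall W'' : G -> Prop,
    (forall x, W'' x -> W' x) -> (exists x, W' x /\ ~ W'' x) ->
    ~ is_complement mul W W''.

Definition same_lcoset (G : Type) (mul : G -> G -> G) (inv : G -> G)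
  (H : G -> Prop) (g1 g2 : G) : Prop := H (mul (inv g1) g2).

(* Main.v *)
Require Import Defs.

Theorem lemma4p2 (G : Type) (mul : G -> G -> G) (one : G) (inv : G -> G)
  (hG : is_group mul one inv) (S H : G -> Prop)
  (hH : is_subgroup mul one inv H)
  (* S -> G -> G/H is surjective: every coset gH meets S *)
  (hsurj : forall g, exists s, S s /\ same_lcoset mul inv H s g)
  (* some fibre (over the coset g0 H) contains exactly one element *)
  (hfib : exists g0 s0, S s0 /\ same_lcoset mul inv H s0 g0 /\
            forall s, S s -> same_lcoset mul inv H s g0 -> s = s0) :
  is_minimal_complement mul S H.
Proof.
  destruct hG as [A M1 M1' MV MV'].
  destruct hH as [H1 [HM HI]].
  assert (K1 : forall a x, mul (inv a) (mul a x) = x).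
  { intros a x. rewrite A, MV, M1. reflexivity. }
  assert (K2 : forall a x, mul a (mul (inv a) x) = x).
  { intros a x. rewrite A, MV', M1. reflexivity. }
  split.
  - split; [exists one; exact H1|].
    intros g. destruct (hsurj g) as [s [Ss Hs]].
    exists s, (mul (inv s) g). split; [exact Ss|split; [exact Hs|rewrite K2; reflexivity]].
  - intros W'' sub [h [Hh nW]] [_ comp].
    destruct hfib as [g0 [s0 [Ss0 [Hs0 uniq]]]].
    destruct (comp (mul s0 h)) as [s [w [Ss [Ww E]]]].
    assert (Hw : H w) by (apply sub; exact Ww).
    assert (Ew : w = mul (inv s) (mul s0 h)) by (rewrite E, K1; reflexivity).
    assert (Hsg : same_lcoset mul inv H s g0).
    { unfold same_lcoset.
      assert (Eq : mul (inv s) g0 = mul w (mul (inv h) (mul (inv s0) g0))).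
      { rewrite Ew. rewrite <- !A. rewrite K2. rewrite K2. reflexivity. }
      rewrite Eq. apply HM; [exact Hw|]. apply HM; [apply HI; exact Hh| exact Hs0]. }
    pose proof (uniq s Ss Hsg) as ->.
    apply nW.
    assert (h = w) as -> by (rewrite Ew, K1; reflexivity).
    exact Ww.
Qed.
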